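(* Let $R$ be a UFD and $\mathfrak p$ a prime ideal of $R$ such that $R$ is complete with respect to some $\mathfrak p$-filtration of $R$. Let $f\in R[X]$ be $\mathfrak p$-distinguished (of some order) with $f_0\neq0$, and let $\Phi=(\Phi_0,\Phi_1,\dots,\Phi_l)$ be a prime factorization of $f$ in $R[X]$, indexed so that for $i>0$ the constant term $(\Phi_i)_0$ is a unit in $R$ if and only if $i>k$, where $k\ge0$. Let $u$ be the leading coefficient of $\Phi_1\cdots\Phi_k$. Then $(u^{-1},\Phi_1,\dots,\Phi_k)$ is a prime factorization of $P_f$ in $R[X]$. Moreover $U_f\in R[X]$, and $(u\Phi_0,\Phi_{k+1},\Phi_{k+2},\dots,\Phi_l)$ is a prime factorization of $U_f$ in $R[X]$.
   Context: A $\mathfrak p$-filtration is a descending sequence of ideals each containing a power of $\mathfrak p$; $R$ is complete with respect to it if $R\to\varprojlim R/\mathfrak f_i$ is an isomorphism. $f$ is $\mathfrak p$-distinguished of order $n$ if its coefficients $f_i$ lie in $\mathfrak p$ for $i<n$ and $f_n$ is a unit mod $\mathfrak p$; then $f=U_fP_f$ with $P_f\in R[X]$ the unique monic polynomial of degree $n$ with non-leading coefficients in $\mathfrak p$ and $U_f\in R[[X]]$ a unit. A prime factorization of an element $a$ of a ring $S$ is a sequence $(\pi_0,\pi_1,\dots,\pi_k)$ with $a=\pi_0\pi_1\cdots\pi_k$, $\pi_0$ a unit of $S$ and $\pi_i$ prime in $S$ for $i>0$. *)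

(* Defs.v *)
From HB Require Import structures.
From mathcomp Require Import all_boot all_order all_algebra.
Set Implicit Arguments. Unset Strict Implicit. Unset Printing Implicit Defensive.
Import Order.TTheory GRing.Theory Num.Theory.
Local Open Scope ring_scope.

Section Defs.
Variable R : comUnitRingType.

Definition dvdr (a b : R) : Prop := exists c : R, b = c * a.

Definition prime_elt (p : R) : Prop :=
  p != 0 /\ ~ (p \is a GRing.unit) /\
  forall a b : R, dvdr p (a * b) -> dvdr p a \/ dvdr p b.

Definition prime_factorization (s : seq R) (a : R) : Prop :=
  exists (pi0 : R) (rest : seq R),
    s = pi0 :: rest /\ pi0 \is a GRing.unit /\
    (forall q, q \in rest -> prime_elt q) /\
    a = pi0 * \prod_(q <- rest) q.

Definition is_ideal (I : R -> Prop) : Prop :=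
  I 0 /\ (forall x y, I x -> I y -> I (x + y)) /\ (forall a x, I x -> I (a * x)).

Definition prime_ideal (P : R -> Prop) : Prop :=
  is_ideal P /\ ~ P 1 /\ forall a b, P (a * b) -> P a \/ P b.

Fixpoint ideal_pow (P : R -> Prop) (n : nat) : R -> Prop :=
  match n with
  | 0 => fun _ => True
  | n'.+1 => fun x => exists s : seq (R * R),
      (forall ab, ab \in s -> ideal_pow P n' ab.1 /\ P ab.2) /\
      x = \sum_(ab <- s) ab.1 * ab.2
  end.

Definition p_filtration (P : R -> Prop) (F : nat -> R -> Prop) : Prop :=
  (forall i, is_ideal (F i)) /\
  (forall i x, F i.+1 x -> F i x) /\
  (forall i, exists n, forall x, ideal_pow P n x -> F i x).

(* R -> lim R/F_i is bijective (injective and surjective) *)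
Definition complete_wrt (F : nat -> R -> Prop) : Prop :=
  (forall x, (forall i, F i x) -> x = 0) /\
  (forall xs : nat -> R, (forall i j, (i <= j)%N -> F i (xs j - xs i)) ->
     exists x, forall i, F i (x - xs i)).

Definition pser := nat -> R.
Definition pser_mul (f g : pser) : pser :=
  fun n => \sum_(i < n.+1) f i * g (n - i)%N.
Definition pser_one : pser := fun n => if n == 0%N then 1 else 0.
Definition pser_unit (f : pser) : Prop :=
  exists g : pser, forall n, pser_mul f g n = pser_one n.
Definition poly_pser (p : {poly R}) : pser := fun n => p`_n.

Definition p_distinguished (P : R -> Prop) (f : {poly R}) (n : nat) : Prop :=
  (forall i, (i < n)%N -> P f`_i) /\ (exists a : R, P (a * f`_n - 1)).

End Defs.

Definition UFD (R : idomainType) : Prop :=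
  forall a : R, a != 0 -> exists s : seq R, prime_factorization s a.

(* Main.v *)
Require Import Defs.
From HB Require Import structures.
From mathcomp Require Import all_boot all_order all_algebra.
From mathcomp Require Import zify ring.
Import Order.TTheory GRing.Theory Num.Theory.
Set Implicit Arguments. Unset Strict Implicit.
Local Open Scope ring_scope.


Lemma ideal_sum (R : comUnitRingType) (I : R -> Prop) (J : Type) (r : seq J) (Q : pred J) (G : J -> R) :
  is_ideal I -> (forall j, Q j -> I (G j)) -> I (\sum_(j <- r | Q j) G j).
Proof. move=> [I0 [ID IM]] H; exact: (big_ind I). Qed.

Lemma ideal_opp (R : comUnitRingType) (I : R -> Prop) x : is_ideal I -> I x -> I (- x).
Proof. move=> [I0 [ID IM]] H; rewrite -mulN1r; exact: IM. Qed.

Lemma ideal_mulr (R : comUnitRingType) (I : R -> Prop) x a : is_ideal I -> I x -> I (x * a).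
Proof. move=> [I0 [ID IM]] H; rewrite mulrC; exact: IM. Qed.

Lemma ipow_ideal (R : comUnitRingType) (P : R -> Prop) k : is_ideal (ideal_pow P k).
Proof.
elim: k => [|k IH] /=; first by split=> //.
split; first by exists [::]; rewrite big_nil.
split.
  move=> x y [s1 [H1 ->]] [s2 [H2 ->]]; exists (s1 ++ s2); rewrite big_cat; split=> //.
  by move=> ab; rewrite mem_cat => /orP [/H1|/H2].
move=> a x [s [H ->]]; exists (map (fun ab => (a * ab.1, ab.2)) s); split.
  move=> ab /mapP [ab' /H [h1 h2] ->] /=; split=> //.
  by case: IH => [_ [_ IM]]; exact: IM.
rewrite big_map mulr_sumr; apply: eq_bigr => ab _ /=; by rewrite mulrA.
Qed.

Lemma ipow_mul (R : comUnitRingType) (P : R -> Prop) k x y :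
  ideal_pow P k x -> P y -> ideal_pow P k.+1 (x * y).
Proof. move=> Hx Hy; exists [:: (x, y)]; rewrite big_seq1; split=> // ab.
by rewrite inE => /eqP ->. Qed.



Lemma uniq_div (R : comUnitRingType) (P : R -> Prop) F (Pf : {poly R}) n (V : pser R) (r : {poly R}) :
  is_ideal P -> p_filtration P F -> complete_wrt F -> Pf`_n = 1 -> size Pf = n.+1 ->
  (forall i, (i < n)%N -> P Pf`_i) -> (size r <= n)%N ->
  (forall m, pser_mul V (poly_pser Pf) m = r`_m) -> forall m, V m = 0.
Proof.
move=> IP [_ [_ HF]] [Hc _] Pn sPf HPf sr HV.
have key : forall k m, ideal_pow P k (V m).
  elim=> [//|k IH] m.
  have E := HV (m + n)%N.
  rewrite nth_default in E; last by apply: leq_trans sr _; rewrite leq_addl.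
  move: E; rewrite /pser_mul /poly_pser.
  have lt : (m < (m + n).+1)%N by rewrite ltnS leq_addr.
  rewrite (bigD1 (Ordinal lt)) //= addKn Pn mulr1 => /eqP; rewrite addr_eq0 => /eqP ->.
  change (ideal_pow P k.+1 (- (\sum_(i < (m + n).+1 | i != Ordinal lt) V i * Pf`_(m + n - i)))).
  eapply ideal_opp; [exact: ipow_ideal|].
  have [I0 [ID IM]] := ipow_ideal P k.+1; apply: (big_ind (ideal_pow P k.+1)) => //.
  move=> i /= Hi; case: (ltnP i m) => him.
    rewrite nth_default ?mulr0; first by case: (ipow_ideal P k.+1).
    by rewrite sPf; lia.
  have him' : (m < i)%N.
    rewrite ltn_neqAle him andbT; apply: (contraNneq _ Hi) => E.
    by apply/eqP; apply: val_inj; exact: esym E.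
  apply: ipow_mul; first exact: IH.
  apply: HPf; have := ltn_ord i; lia.
move=> m; apply: Hc => i; have [k Hk] := HF i; exact: Hk.
Qed.



Lemma pser_mul_poly (R : comUnitRingType) (p q : {poly R}) m :
  pser_mul (poly_pser p) (poly_pser q) m = (p * q)`_m.
Proof. by rewrite coefM. Qed.

Lemma pser_unit0 (R : comUnitRingType) (U : pser R) : pser_unit U -> U 0%N \is a GRing.unit.
Proof.
move=> [g Hg]; have := Hg 0%N; rewrite /pser_mul /pser_one big_ord1 /= => E.
by apply/unitrPr; exists (g 0%N).
Qed.

Lemma dvd_prod_cancel (D : idomainType) (L : seq D) x y :
  (forall q, q \in L -> prime_elt q /\ ~ dvdr q y) ->
  dvdr (\prod_(q <- L) q) (x * y) -> dvdr (\prod_(q <- L) q) x.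
Proof.
elim: L x => [|q L IH] x HL.
  by move=> _; exists x; rewrite big_nil mulr1.
rewrite big_cons => [[c Hc]].
have [[qn0 [_ Hq]] Hqy] := HL q (mem_head _ _).
have : dvdr q (x * y) by exists (c * \prod_(j <- L) j); rewrite Hc mulrA mulrAC.
move/Hq => [[x' Hx']|//].
have H1 : dvdr (\prod_(j <- L) j) (x' * y).
  exists c; apply: (mulIf qn0).
  by rewrite mulrAC -Hx' Hc mulrA mulrAC.
have [d Hd] := IH x' (fun j hj => HL j (introT orP (or_intror hj))) H1.
by exists d; rewrite Hx' Hd mulrA mulrAC.
Qed.



Lemma unit_notin (R : comUnitRingType) (P : R -> Prop) x :
  prime_ideal P -> x \is a GRing.unit -> ~ P x.
Proof.
move=> [[_ [_ IM]] [N1 _]] ux Px; apply: N1; rewrite -(mulVr ux); exact: IM.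
Qed.

Lemma notdvd_B (R : idomainType) (P : R -> Prop) (Pf q : {poly R}) n :
  prime_ideal P -> Pf`_n = 1 -> size Pf = n.+1 -> (forall i, (i < n)%N -> P Pf`_i) ->
  prime_elt q -> q`_0 \is a GRing.unit -> ~ dvdr q Pf.
Proof.
move=> HP Pn sPf HPf [qn0 [qnu _]] q0u [c Hc].
have HP' := HP; case: HP' => [IP [N1 PP]]; have [I0 [ID IM]] := IP.
have nq0 := unit_notin HP q0u.
have hc : forall i, (i < n)%N -> P c`_i.
  elim/ltn_ind => i IHi lin.
  have := HPf i lin; rewrite Hc mulrC coefM big_ord_recl subn0 => H.
  have : P (q`_0 * c`_i).
    have -> : q`_0 * c`_i = ((q`_0 * c`_i) + \sum_(i0 < i) q`_(lift ord0 i0) * c`_(i - lift ord0 i0)) - \sum_(i0 < i) q`_(lift ord0 i0) * c`_(i - lift ord0 i0) by rewrite addrK.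
    apply: ID => //; apply: ideal_opp => //; apply: ideal_sum => // j _.
    apply: IM; apply: IHi; have := ltn_ord j; rewrite /= /bump /=; lia.
  by case/PP.
have cn0 : c != 0.
  by apply/eqP => c0; move: sPf; rewrite Hc c0 mul0r size_poly0.
have sPf' := sPf; rewrite Hc size_mul // in sPf'.
case: (leqP (size q) 1) => sq.
  apply: qnu; rewrite poly_unitE q0u andbT eqn_leq sq /=.
  by rewrite size_poly_gt0.
have sc : (0 < size c)%N by rewrite size_poly_gt0.
have Plc : P (lead_coef c) by rewrite lead_coefE; apply: hc; lia.
apply: N1.
have <- : lead_coef Pf = 1 by rewrite lead_coefE sPf.
rewrite Hc lead_coefM mulrC; exact: IM.
Qed.



Theorem proposition5p3 (R : idomainType) (P : R -> Prop) (F : nat -> R -> Prop)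
    (f : {poly R}) (n : nat) (Phi0 : {poly R}) (A B : seq {poly R})
    (Pf : {poly R}) (Uf : pser R) :
  UFD R -> prime_ideal P -> p_filtration P F -> complete_wrt F ->
  p_distinguished P f n -> f`_0 != 0 ->
  (* Pf, Uf : the Weierstrass data of f *)
  Pf \is monic -> size Pf = n.+1 -> (forall i, (i < n)%N -> P Pf`_i) ->
  pser_unit Uf -> (forall m, pser_mul Uf (poly_pser Pf) m = f`_m) ->
  (* Phi = (Phi0, A = Phi_1..Phi_k, B = Phi_{k+1}..Phi_l) *)
  prime_factorization (Phi0 :: A ++ B) f ->
  (forall q, q \in A -> ~ (q`_0 \is a GRing.unit)) ->
  (forall q, q \in B -> q`_0 \is a GRing.unit) ->
  let u := lead_coef (\prod_(q <- A) q) in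
  prime_factorization ((u^-1)%:P :: A) Pf /\
  exists Up : {poly R}, (forall m, Uf m = Up`_m) /\
    prime_factorization ((u%:P * Phi0) :: B) Up.
Proof.
move=> _ HP HF Hc _ f0 mon sPf HPf Uu HUf Hfact HA HB u.
have Pn : Pf`_n = 1 by move/monicP: mon; rewrite lead_coefE sPf.
have Pfn0 := monic_neq0 mon.
set Up := Pdiv.CommonRing.rdivp f Pf.
set r := Pdiv.CommonRing.rmodp f Pf.
have E : f = Up * Pf + r := Pdiv.RingMonic.rdivp_eq mon f.
have sr : (size r <= n)%N by have := Pdiv.CommonRing.ltn_rmodpN0 f Pfn0; rewrite sPf.
have Er : r = f - Up * Pf by rewrite {1}E addrAC subrr add0r.
set V := fun m => Uf m - Up`_m.
have HV : forall m, pser_mul V (poly_pser Pf) m = r`_m.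
  move=> m; rewrite Er coefB -HUf -pser_mul_poly /pser_mul -sumrB.
  by apply: eq_bigr => i _; rewrite /V mulrBl.
have Vz := uniq_div (proj1 HP) HF Hc Pn sPf HPf sr HV.
have HUp : forall m, Uf m = Up`_m by move=> m; apply/eqP; rewrite -subr_eq0; apply/eqP; exact: Vz.
have r0 : r = 0.
  apply/polyP => m; rewrite coef0 -HV /pser_mul; apply: big1 => i _.
  by rewrite Vz mul0r.
have fE : f = Up * Pf by rewrite E r0 addr0.
have Up0u : Up`_0 \is a GRing.unit by rewrite -HUp; exact: pser_unit0.
case: Hfact => pi0 [rest [Hs [Phi0u [Hpr Hf]]]].
case: Hs => Epi Erest; subst pi0 rest.
rewrite big_cat /= in Hf.
set a := \prod_(q <- A) q in Hf u *.
set b := \prod_(q <- B) q in Hf *.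
have HAnd : forall q, q \in A -> prime_elt q /\ ~ dvdr q Up.
  move=> q qA; split; first by apply: Hpr; rewrite mem_cat qA.
  move=> [c Hcq]; apply: (HA q qA); move: Up0u; rewrite Hcq coef0M unitrM.
  by case/andP.
have HBnd : forall q, q \in B -> prime_elt q /\ ~ dvdr q Pf.
  move=> q qB; have pq : prime_elt q by apply: Hpr; rewrite mem_cat qB orbT.
  split=> //; exact: (notdvd_B HP Pn sPf HPf pq (HB q qB)).
have [s Hs] : dvdr a Pf.
  apply: (dvd_prod_cancel HAnd); exists (Phi0 * b).
  by rewrite mulrC -fE Hf mulrA mulrAC.
have [t Ht] : dvdr b Up.
  apply: (dvd_prod_cancel HBnd); exists (Phi0 * a).
  by rewrite -fE Hf mulrA.
have fn0 : f != 0 by apply/eqP => f00; move: f0; rewrite f00 coef0 eqxx.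
have ab0 : a * b != 0 by apply/eqP => ab00; move: fn0; rewrite Hf ab00 mulr0 eqxx.
have Phits : Phi0 = t * s.
  apply: (mulIf ab0); rewrite -Hf fE Ht Hs; ring.
have su : s \is a GRing.unit by move: Phi0u; rewrite Phits unitrM => /andP [].
have Hs0 : s = (s`_0)%:P by apply: size1_polyC; move: su; rewrite poly_unitE => /andP [/eqP -> _].
have E1 : s`_0 * u = 1.
  by move/monicP: mon; rewrite Hs lead_coefM {1}Hs0 lead_coefC.
have uu : u \is a GRing.unit by apply/unitrPr; exists s`_0; rewrite mulrC.
have us : s`_0 = u^-1 by rewrite -[s`_0]mulr1 -(mulrV uu) mulrA E1 mul1r.
split.
  exists (u^-1)%:P, A; split=> //; split; first by rewrite -us -Hs0.
  split; first by move=> q qA; apply: Hpr; rewrite mem_cat qA.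
  by rewrite Hs Hs0 us.
exists Up; split=> //; exists (u%:P * Phi0), B; split=> //; split.
  rewrite unitrM Phi0u andbT; apply/unitrPr; exists (u^-1)%:P.
  by rewrite -polyCM mulrV.
split; first by move=> q qB; apply: Hpr; rewrite mem_cat qB orbT.
rewrite Ht Phits Hs0 us; congr (_ * _).
by rewrite mulrCA -polyCM mulrV // mulr1.
Qed.
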